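(* Fix $m\in\mathbb N$ and $\xi\in\mathbb R^m$, and let $\rho=\sqrt{\log m+1}\,\|\xi\|$. For every integer $k\geq1$ with $k\geq 2m\rho$, $$\Big|\big(\widehat{e^{2\operatorname{Im}g_+}}\big)_k\Big|\leq 2e^{\rho}\frac{\rho^{\lceil k/m\rceil}}{\lceil k/m\rceil!}.$$
   Context: $g_+(\theta)=\sum_{j=1}^m\frac{\xi_j}{\sqrt j}e^{ij\theta}$, so $\operatorname{Im}g_+(\theta)=\sum_{j=1}^m\frac{\xi_j}{\sqrt j}\sin j\theta$. For a function $c$ on $[-\pi,\pi]$, $\hat c_k=\frac1{2\pi}\int_{-\pi}^{\pi}c(\theta)e^{-ik\theta}d\theta$. $\log$ is natural. *)

(* Defs.v *)
From Stdlib Require Import Reals Factorial.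
From Coquelicot Require Import Coquelicot.
Open Scope R_scope.

(* xi : nat -> R, only the entries xi 1, ..., xi m are used (xi in R^m). *)

Definition xi_norm (m : nat) (xi : nat -> R) : R :=
  match m with
  | O => 0
  | S m' => sqrt (sum_f_R0 (fun i => (xi (S i)) ^ 2) m')
  end.

Definition Im_gplus (m : nat) (xi : nat -> R) (theta : R) : R :=
  match m with
  | O => 0
  | S m' => sum_f_R0 (fun i => xi (S i) / sqrt (INR (S i)) * sin (INR (S i) * theta)) m'
  end.

Definition cexpi (t : R) : C := (cos t, sin t).

Definition fourier_coef (c : R -> R) (k : Z) : C :=
  Cmult (RtoC (/ (2 * PI)))
    (RInt (V := C_R_CompleteNormedModule)
       (fun theta => Cmult (RtoC (c theta)) (cexpi (- (IZR k) * theta))) (- PI) PI).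

Definition ceil_div (k m : nat) : nat := ((k + m - 1) / m)%nat.

(* Main.v *)
Require Import Defs.
From Stdlib Require Import Reals Factorial Lia Lra ZArith List.
From Coquelicot Require Import Coquelicot.
Open Scope R_scope.

Fixpoint csum (f : nat -> C) (n : nat) : C :=
  match n with O => f O | S n' => Cplus (csum f n') (f (S n')) end.

Lemma csum_ext f g n : (forall i, (i <= n)%nat -> f i = g i) -> csum f n = csum g n.
Proof. induction n; intros H; simpl. apply H; lia. rewrite IHn. rewrite H. reflexivity. lia. intros; apply H; lia. Qed.

Lemma csum_plus f g n : csum (fun i => Cplus (f i) (g i)) n = Cplus (csum f n) (csum g n).
Proof. induction n; simpl. reflexivity. rewrite IHn. ring. Qed.

Lemma csum_mult_l c f n : Cmult c (csum f n) = csum (fun i => Cmult c (f i)) n.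
Proof. induction n; simpl. reflexivity. rewrite <- IHn. ring. Qed.

Lemma csum_shift f n : csum f (S n) = Cplus (f O) (csum (fun i => f (S i)) n).
Proof. induction n. simpl. reflexivity. change (csum f (S (S n))) with (Cplus (csum f (S n)) (f (S (S n)))). rewrite IHn. simpl. ring. Qed.

Lemma csum_last f n : csum f (S n) = Cplus (csum f n) (f (S n)).
Proof. reflexivity. Qed.

Lemma csum_RtoC g n : RtoC (sum_f_R0 g n) = csum (fun i => RtoC (g i)) n.
Proof. induction n; simpl. reflexivity. rewrite <- IHn. rewrite RtoC_plus. reflexivity. Qed.

Lemma Cmod_csum f n : Cmod (csum f n) <= sum_f_R0 (fun i => Cmod (f i)) n.
Proof. induction n; simpl. lra. eapply Rle_trans. apply Cmod_triangle. lra. Qed.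

Lemma csum_zero n : csum (fun _ => RtoC 0) n = RtoC 0.
Proof. induction n; simpl. reflexivity. rewrite IHn. ring. Qed.

Definition ce (z : C) (n : nat) : C := Cmult (RtoC (/ INR (fact n))) (Cpow z n).

Lemma INR_fact_neq0 n : INR (fact n) <> 0.
Proof. apply not_0_INR. apply fact_neq_0. Qed.

Lemma ce_S z n : Cmult (RtoC (INR (S n))) (ce z (S n)) = Cmult z (ce z n).
Proof.
  unfold ce. simpl Cpow.
  assert (E : INR (S n) * / INR (fact (S n)) = / INR (fact n)).
  { rewrite fact_simpl, mult_INR. field. split. apply INR_fact_neq0. apply not_0_INR; lia. }
  transitivity (Cmult (RtoC (INR (S n) * / INR (fact (S n)))) (Cmult z (Cpow z n))).
  rewrite RtoC_mult. ring. rewrite E. ring.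
Qed.

Definition Qs (A B : C) (n : nat) : C := csum (fun a => Cmult (ce A a) (ce B (n - a))) n.

Lemma Qrec (A B : C) n : Cmult (RtoC (INR (S n))) (Qs A B (S n)) = Cmult (Cplus A B) (Qs A B n).
Proof.
  unfold Qs. rewrite csum_mult_l.
  rewrite (csum_ext _ (fun a => Cplus (Cmult (RtoC (INR a)) (Cmult (ce A a) (ce B (S n - a))))
       (Cmult (ce A a) (Cmult (RtoC (INR (S n - a))) (ce B (S n - a)))))).
  2:{ intros i Hi. replace (INR (S n)) with (INR i + INR (S n - i)).
      rewrite RtoC_plus. ring. rewrite <- plus_INR. f_equal. lia. }
  rewrite csum_plus. rewrite Cmult_plus_distr_r. f_equal.
  - rewrite csum_shift. simpl (INR 0). rewrite Cmult_0_l, Cplus_0_l.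
    rewrite csum_mult_l. apply csum_ext. intros i Hi.
    replace (S n - S i)%nat with (n - i)%nat by lia.
    rewrite Cmult_assoc, ce_S. ring.
  - rewrite csum_last. rewrite Nat.sub_diag. simpl (INR 0). rewrite Cmult_0_l, Cmult_0_r, Cplus_0_r.
    rewrite csum_mult_l. apply csum_ext. intros i Hi.
    replace (S n - i)%nat with (S (n - i)) by lia.
    rewrite ce_S. ring.
Qed.

Lemma ce_sum (A B : C) n : ce (Cplus A B) n = Qs A B n.
Proof.
  induction n.
  - unfold Qs, ce. simpl. apply injective_projections; simpl; field.
  - assert (H := Qrec A B n). rewrite <- IHn, <- ce_S in H.
    assert (Hn : RtoC (INR (S n)) <> RtoC 0). { intro E. apply RtoC_inj in E. apply (not_0_INR (S n)); auto. }
    apply (f_equal (Cmult (Cinv (RtoC (INR (S n)))))) in H.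
    rewrite !Cmult_assoc, Cinv_l in H by auto. rewrite !Cmult_1_l in H. symmetry; exact H.
Qed.


Lemma cexpi_add a b : cexpi (a + b) = Cmult (cexpi a) (cexpi b).
Proof. unfold cexpi. rewrite cos_plus, sin_plus. apply injective_projections; simpl; ring. Qed.

Lemma cexpi_0 : cexpi 0 = RtoC 1.
Proof. unfold cexpi. rewrite cos_0, sin_0. reflexivity. Qed.

Lemma Cmod_cexpi t : Cmod (cexpi t) = 1.
Proof. assert (H := sin2_cos2 t). unfold Rsqr in H. unfold Cmod, cexpi. simpl.
  rewrite !Rmult_1_r, Rplus_comm, H. apply sqrt_1. Qed.

Definition tp (l : list (C * Z)) (t : R) : C :=
  fold_right (fun p acc => Cplus (Cmult (fst p) (cexpi (IZR (snd p) * t))) acc) (RtoC 0) l.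

Definition lmul (l1 l2 : list (C * Z)) : list (C * Z) :=
  flat_map (fun p => map (fun q => (Cmult (fst p) (fst q), (snd p + snd q)%Z)) l2) l1.

Lemma tp_app l1 l2 t : tp (l1 ++ l2) t = Cplus (tp l1 t) (tp l2 t).
Proof. induction l1; simpl. ring. unfold tp in *. simpl. rewrite IHl1. ring. Qed.

Lemma tp_map c z l2 t :
  tp (map (fun q => (Cmult c (fst q), (z + snd q)%Z)) l2) t = Cmult (Cmult c (cexpi (IZR z * t))) (tp l2 t).
Proof. induction l2; simpl. unfold tp; simpl. rewrite Cmult_0_r; reflexivity. unfold tp in *; simpl. rewrite IHl2.
  rewrite plus_IZR, Rmult_plus_distr_r, cexpi_add. ring. Qed.

Lemma tp_mul l1 l2 t : tp (lmul l1 l2) t = Cmult (tp l1 t) (tp l2 t).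
Proof. induction l1; simpl. unfold tp; simpl. rewrite Cmult_0_l; reflexivity. unfold lmul in *. simpl. rewrite tp_app, IHl1, tp_map.
  unfold tp at 3. simpl. fold (tp l1 t). fold (tp l2 t). ring. Qed.

Definition Good (H : Z) (f : R -> C) : Prop :=
  exists l, List.Forall (fun p => (snd p <= H)%Z) l /\ forall t, f t = tp l t.

Lemma Good_ext H f g : (forall t, f t = g t) -> Good H f -> Good H g.
Proof. intros E [l [F G]]. exists l. split; auto. intros; rewrite <- E; auto. Qed.

Lemma Good_mono H H' f : (H <= H')%Z -> Good H f -> Good H' f.
Proof. intros Hl [l [F G]]. exists l. split; auto. eapply List.Forall_impl; [|exact F]. simpl; intros; lia. Qed.

Lemma Good_zero H : Good H (fun _ => RtoC 0).
Proof. exists nil. split; auto. Qed.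

Lemma Good_exp c z : Good z (fun t => Cmult c (cexpi (IZR z * t))).
Proof. exists ((c, z) :: nil). split. constructor; simpl; [lia|auto]. intros; unfold tp; simpl; ring. Qed.

Lemma Good_const c : Good 0 (fun _ => c).
Proof. eapply Good_ext; [|apply (Good_exp c 0)]. intros; simpl. rewrite Rmult_0_l, cexpi_0. ring. Qed.

Lemma Good_plus H f g : Good H f -> Good H g -> Good H (fun t => Cplus (f t) (g t)).
Proof. intros [l1 [F1 G1]] [l2 [F2 G2]]. exists (l1 ++ l2). split.
  apply List.Forall_app; auto. intros; rewrite tp_app, G1, G2; auto. Qed.

Lemma Good_mult H1 H2 f g : Good H1 f -> Good H2 g -> Good (H1 + H2) (fun t => Cmult (f t) (g t)).
Proof. intros [l1 [F1 G1]] [l2 [F2 G2]]. exists (lmul l1 l2). split.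
  - unfold lmul. apply List.Forall_flat_map. eapply List.Forall_impl; [|exact F1]. intros p Hp.
    apply List.Forall_map. eapply List.Forall_impl; [|exact F2]. intros q Hq. simpl in *. lia.
  - intros; rewrite tp_mul, G1, G2; auto. Qed.

Lemma Good_csum H (f : nat -> R -> C) n : (forall i, (i <= n)%nat -> Good H (f i)) ->
  Good H (fun t => csum (fun i => f i t) n).
Proof. induction n; intros Hf; simpl. apply Hf; lia.
  apply Good_plus. apply IHn; intros; apply Hf; lia. apply Hf; lia. Qed.

Lemma Good_pow H f n : Good H f -> Good (Z.of_nat n * H) (fun t => Cpow (f t) n).
Proof. intros Hf. induction n.
  - simpl. apply Good_const.
  - replace (Z.of_nat (S n) * H)%Z with (H + Z.of_nat n * H)%Z by lia.
    apply (Good_mult _ _ f (fun t => Cpow (f t) n)); auto. Qed.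


Lemma is_RInt_C (g : R -> C) a b lu lv :
  is_RInt (fun t => fst (g t)) a b lu -> is_RInt (fun t => snd (g t)) a b lv ->
  is_RInt (V := C_R_CompleteNormedModule) g a b (lu, lv).
Proof. intros H1 H2. apply (is_RInt_fct_extend_pair (U := R_NormedModule) (V := R_NormedModule) g a b lu lv H1 H2). Qed.

Lemma ex_RInt_C (g : R -> C) a b :
  ex_RInt (fun t => fst (g t)) a b -> ex_RInt (fun t => snd (g t)) a b ->
  ex_RInt (V := C_R_CompleteNormedModule) g a b.
Proof. intros [lu H1] [lv H2]. exists (lu, lv). apply is_RInt_C; auto. Qed.

Lemma sin_zPI z : sin (IZR z * PI) = 0.
Proof. apply sin_eq_0_1. exists z. reflexivity. Qed.

Lemma int_cos_sin (z : Z) (p q : R) : z <> 0%Z ->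
  is_RInt (fun t => p * cos (IZR z * t) + q * sin (IZR z * t)) (-PI) PI 0.
Proof.
  intros Hz. assert (Hz' : IZR z <> 0) by (apply not_0_IZR; auto).
  set (F := fun t => (p * sin (IZR z * t) - q * cos (IZR z * t)) / IZR z).
  assert (E : minus (F PI) (F (-PI)) = 0).
  { unfold F, minus, plus, opp; simpl. replace (IZR z * - PI) with (- (IZR z * PI)) by ring.
    rewrite sin_neg, cos_neg, sin_zPI. field. auto. }
  rewrite <- E. apply (is_RInt_derive (V := R_CompleteNormedModule) F).
  - intros x _. unfold F. auto_derive. auto. field. auto.
  - intros x _. apply continuity_pt_filterlim. apply derivable_continuous_pt. reg.
Qed.

Lemma int_exp (c : C) (z : Z) : z <> 0%Z ->
  is_RInt (V := C_R_CompleteNormedModule) (fun t => Cmult c (cexpi (IZR z * t))) (-PI) PI (RtoC 0).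
Proof.
  intros Hz. apply is_RInt_C.
  - eapply is_RInt_ext; [|apply (int_cos_sin z (fst c) (- snd c) Hz)]. intros x _. simpl. ring.
  - eapply is_RInt_ext; [|apply (int_cos_sin z (snd c) (fst c) Hz)]. intros x _. simpl. ring.
Qed.

Lemma is_RInt_val {V : CompleteNormedModule R_AbsRing} (f : R -> V) a b l l' : l = l' -> is_RInt f a b l -> is_RInt f a b l'.
Proof. intros ->; auto. Qed.

Lemma int_Good H f : (H <= -1)%Z -> Good H f ->
  is_RInt (V := C_R_CompleteNormedModule) f (-PI) PI (RtoC 0).
Proof.
  intros HH [l [F G]]. eapply is_RInt_ext. intros; symmetry; apply G.
  clear G f. induction l as [|p l IH].
  - unfold tp; simpl. eapply is_RInt_val; [|apply (is_RInt_const (V := C_R_CompleteNormedModule) (-PI) PI (RtoC 0))].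
    apply injective_projections; simpl; unfold scal; simpl; unfold mult; simpl; ring.
  - inversion F; subst. simpl in *.
    eapply is_RInt_val; [|eapply is_RInt_ext; [|apply (is_RInt_plus (V := C_R_CompleteNormedModule))]].
    2: (intros x _; reflexivity).
    2: (apply int_exp; lia).
    2: (apply IH; auto).
    apply injective_projections; simpl; unfold plus; simpl; ring.
Qed.


Definition cc (xi : nat -> R) (i : nat) : R := xi (S i) / sqrt (INR (S i)).
Definition cA (m' : nat) (xi : nat -> R) (t : R) : C := csum (fun i => Cmult (0, - cc xi i) (cexpi (IZR (Z.of_nat (S i)) * t))) m'.
Definition cB (m' : nat) (xi : nat -> R) (t : R) : C := csum (fun i => Cmult (0, cc xi i) (cexpi (IZR (- Z.of_nat (S i)) * t))) m'.
Definition sc (m' : nat) (xi : nat -> R) : R := sum_f_R0 (fun i => Rabs (cc xi i)) m'.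

Lemma AB_sum m' xi t : Cplus (cA m' xi t) (cB m' xi t) = RtoC (2 * Im_gplus (S m') xi t).
Proof.
  unfold cA, cB, Im_gplus. rewrite <- csum_plus. rewrite RtoC_mult, csum_RtoC, csum_mult_l.
  apply csum_ext. intros i _. rewrite opp_IZR, <- INR_IZR_INZ. unfold cc, cexpi.
  replace (- INR (S i) * t) with (- (INR (S i) * t)) by ring. rewrite cos_neg, sin_neg.
  apply injective_projections; simpl; ring.
Qed.

Lemma Good_cA m' xi : Good (Z.of_nat (S m')) (cA m' xi).
Proof. unfold cA. apply (Good_csum _ (fun i t => Cmult (0, - cc xi i) (cexpi (IZR (Z.of_nat (S i)) * t)))).
  intros i Hi. eapply Good_mono; [|apply Good_exp]. lia. Qed.

Lemma Good_cB m' xi : Good (-1) (cB m' xi).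
Proof. unfold cB. apply (Good_csum _ (fun i t => Cmult (0, cc xi i) (cexpi (IZR (- Z.of_nat (S i)) * t)))).
  intros i Hi. eapply Good_mono; [|apply Good_exp]. lia. Qed.

Lemma Cmod_pair0 c : Cmod (0, c) = Rabs c.
Proof. unfold Cmod; simpl. replace (0 * (0 * 1) + c * (c * 1)) with (c * c) by ring. apply sqrt_Rsqr_abs. Qed.

Lemma cA_bound m' xi t : Cmod (cA m' xi t) <= sc m' xi.
Proof. unfold cA, sc. eapply Rle_trans. apply Cmod_csum. apply sum_Rle. intros i _.
  rewrite Cmod_mult, Cmod_cexpi, Cmod_pair0, Rabs_Ropp. lra. Qed.

Lemma cB_bound m' xi t : Cmod (cB m' xi t) <= sc m' xi.
Proof. unfold cB, sc. eapply Rle_trans. apply Cmod_csum. apply sum_Rle. intros i _.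
  rewrite Cmod_mult, Cmod_cexpi, Cmod_pair0. lra. Qed.

Lemma Im_bound m' xi t : Rabs (2 * Im_gplus (S m') xi t) <= 2 * sc m' xi.
Proof. rewrite Rabs_mult, Rabs_right by lra. apply Rmult_le_compat_l; [lra|].
  unfold Im_gplus, sc. eapply Rle_trans. apply sum_f_R0_triangle. apply sum_Rle. intros i _.
  fold (cc xi i). rewrite Rabs_mult. assert (H := Rabs_pos (cc xi i)). assert (H2 := Rabs_pos (sin (INR (S i) * t))).
  assert (H3 := SIN_bound (INR (S i) * t)). assert (Rabs (sin (INR (S i) * t)) <= 1) by (apply Rabs_le; lra). nra.
Qed.


Definition Sx (x : R) (M : nat) : R := sum_f_R0 (fun n => x ^ n / INR (fact n)) M.

Lemma Sx_lim x : is_lim_seq (fun M => Sx x M) (exp x).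
Proof.
  assert (H := is_exp_Reals x). unfold is_pseries, is_series in H.
  eapply is_lim_seq_ext; [|exact H]. intros M. unfold Sx. rewrite sum_n_Reals.
  apply sum_eq. intros i _. rewrite pow_n_pow. unfold scal; simpl. unfold mult; simpl. unfold Rdiv. ring.
Qed.

Lemma Sx_le_exp r M : 0 <= r -> Sx r M <= exp r.
Proof. intros Hr. apply (is_lim_seq_incr_compare (fun M => Sx r M)). apply Sx_lim.
  intros n. unfold Sx. change (sum_f_R0 ?f (S n)) with (sum_f_R0 f n + f (S n)). assert (0 <= r ^ S n / INR (fact (S n))).
  { apply Rmult_le_pos. apply pow_le; auto. apply Rlt_le, Rinv_0_lt_compat, INR_fact_lt_0. } lra. Qed.

Lemma term_bound x r n : Rabs x <= r -> Rabs (x ^ n / INR (fact n)) <= r ^ n / INR (fact n).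
Proof. intros H. unfold Rdiv. rewrite Rabs_mult, <- RPow_abs, Rabs_inv, (Rabs_right (INR (fact n))).
  apply Rmult_le_compat_r. apply Rlt_le, Rinv_0_lt_compat, INR_fact_lt_0.
  apply pow_incr. split; auto. apply Rabs_pos. apply Rle_ge, pos_INR. Qed.

Lemma taylor_fin x r M d : Rabs x <= r -> Rabs (Sx x (M + d) - Sx x M) <= Sx r (M + d) - Sx r M.
Proof. intros H. induction d.
  - rewrite Nat.add_0_r. rewrite !Rminus_diag, Rabs_R0. lra.
  - rewrite Nat.add_succ_r. unfold Sx in *.
    change (sum_f_R0 ?f (S (M + d))) with (sum_f_R0 f (M + d) + f (S (M + d))).
    assert (T := term_bound x r (S (M + d)) H).
    set (a := sum_f_R0 (fun n : nat => x ^ n / INR (fact n)) (M + d)) in *.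
    set (b := sum_f_R0 (fun n : nat => x ^ n / INR (fact n)) M) in *.
    set (u := x ^ S (M + d) / INR (fact (S (M + d)))) in *.
    replace (a + u - b) with ((a - b) + u) by ring.
    eapply Rle_trans. apply Rabs_triang. lra.
Qed.

Lemma taylor_bound x r M : Rabs x <= r -> Rabs (exp x - Sx x M) <= exp r - Sx r M.
Proof.
  intros H.
  assert (L1 : is_lim_seq (fun K => Rabs (Sx x K - Sx x M)) (Rabs (exp x - Sx x M))).
  { apply (is_lim_seq_abs _ (Finite (exp x - Sx x M))). apply (is_lim_seq_minus _ _ (exp x) (Sx x M)). apply Sx_lim. apply is_lim_seq_const. reflexivity. }
  assert (L2 : is_lim_seq (fun K => Sx r K - Sx r M) (exp r - Sx r M)).
  { apply (is_lim_seq_minus _ _ (exp r) (Sx r M)). apply Sx_lim. apply is_lim_seq_const. reflexivity. }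
  assert (Ev : eventually (fun K => Rabs (Sx x K - Sx x M) <= Sx r K - Sx r M)).
  { exists M. intros K HK. replace K with (M + (K - M))%nat by lia. apply taylor_fin; auto. }
  assert (Hl := is_lim_seq_le_loc _ _ _ _ Ev L1 L2).
  simpl in Hl. exact Hl.
Qed.

Lemma delta_lim r : is_lim_seq (fun M => exp r - Sx r M) 0.
Proof. replace 0 with (exp r - exp r) by ring. apply (is_lim_seq_minus _ _ (exp r) (exp r)).
  apply is_lim_seq_const. apply Sx_lim. reflexivity. Qed.


Lemma sq_le_sq u v : 0 <= u -> 0 <= v -> u * u <= v * v -> u <= v.
Proof. intros. nra. Qed.

Lemma sum_nonneg f n : (forall i, 0 <= f i) -> 0 <= sum_f_R0 f n.
Proof. intros H. induction n; simpl. apply H. specialize (H (S n)). lra. Qed.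

Lemma abs_sq y : Rabs y * Rabs y = y * y.
Proof. unfold Rabs; destruct (Rcase_abs y); ring. Qed.

Lemma CS2 (a b : nat -> R) n :
  (sum_f_R0 (fun i => Rabs (a i * b i)) n) ^ 2 <=
  sum_f_R0 (fun i => a i ^ 2) n * sum_f_R0 (fun i => b i ^ 2) n.
Proof.
  induction n; simpl.
  - right. assert (E := abs_sq (a 0%nat * b 0%nat)). nra.
  - set (X := sum_f_R0 (fun i => Rabs (a i * b i)) n) in *.
    set (P := sum_f_R0 (fun i => a i ^ 2) n) in *.
    set (Q := sum_f_R0 (fun i => b i ^ 2) n) in *.
    set (x := Rabs (a (S n) * b (S n))).
    set (p := a (S n) * (a (S n) * 1)). set (q := b (S n) * (b (S n) * 1)).
    assert (HX : 0 <= X) by (apply sum_nonneg; intros; apply Rabs_pos).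
    assert (HP : 0 <= P) by (apply sum_nonneg; intros; apply pow2_ge_0).
    assert (HQ : 0 <= Q) by (apply sum_nonneg; intros; apply pow2_ge_0).
    assert (Hp : 0 <= p) by (unfold p; nra). assert (Hq : 0 <= q) by (unfold q; nra).
    assert (Hx : 0 <= x) by apply Rabs_pos.
    assert (Hxx : x * x = p * q). { unfold x, p, q. rewrite abs_sq. ring. }
    assert (H2 : 2 * X * x <= P * q + p * Q).
    { apply sq_le_sq. apply Rmult_le_pos; [apply Rmult_le_pos|]; lra.
      apply Rplus_le_le_0_compat; apply Rmult_le_pos; lra. simpl in IHn.
      assert (E : 2 * X * x * (2 * X * x) = 4 * (X * (X * 1)) * (x * x)) by ring. rewrite E, Hxx.
      assert (0 <= (P * q - p * Q) ^ 2) by apply pow2_ge_0. nra. }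
    unfold P, Q in *. simpl in *. nra.
Qed.

Lemma ln_le_minus1 y : 0 < y -> ln y <= y - 1.
Proof. intros Hy. assert (H := exp_ineq1_le (y - 1)). rewrite <- (ln_exp (y - 1)).
  apply ln_le; auto. lra. Qed.

Lemma harm n : sum_f_R0 (fun i => / INR (S i)) n <= ln (INR (S n)) + 1.
Proof.
  induction n.
  - simpl. rewrite ln_1. lra.
  - change (sum_f_R0 ?f (S n)) with (sum_f_R0 f n + f (S n)).
    assert (Ha : 0 < INR (S n)) by (apply lt_0_INR; lia).
    assert (Hb : 0 < INR (S (S n))) by (apply lt_0_INR; lia).
    assert (E : INR (S (S n)) = INR (S n) + 1) by (rewrite S_INR; auto).
    assert (H := ln_le_minus1 (INR (S n) / INR (S (S n))) ltac:(apply Rdiv_lt_0_compat; auto)).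
    rewrite ln_div in H by auto.
    assert (E2 : INR (S n) / INR (S (S n)) - 1 = - / INR (S (S n))) by (rewrite E; field; lra).
    lra.
Qed.

Definition tt (r : R) (p : nat) : R := r ^ p / INR (fact p).

Lemma tt_nonneg r p : 0 <= r -> 0 <= tt r p.
Proof. intros. unfold tt. apply Rmult_le_pos. apply pow_le; auto. apply Rlt_le, Rinv_0_lt_compat, INR_fact_lt_0. Qed.

Lemma tt_S r p : tt r (S p) = tt r p * r / INR (S p).
Proof. unfold tt. rewrite fact_simpl, mult_INR. simpl pow. field. split. apply INR_fact_neq_0. apply not_0_INR; lia. Qed.

Lemma tt_half r N p : 0 <= r -> 2 * r <= INR N -> (N <= p)%nat -> 2 * tt r (S p) <= tt r p.
Proof. intros Hr HN Hp. rewrite tt_S. assert (H0 := tt_nonneg r p Hr).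
  assert (Hp' : INR N <= INR p) by (apply le_INR; auto). rewrite S_INR.
  assert (Hpos : 0 < INR p + 1) by (assert (0 <= INR p) by apply pos_INR; lra).
  unfold Rdiv. apply Rmult_le_reg_r with (INR p + 1); auto.
  replace (2 * (tt r p * r * / (INR p + 1)) * (INR p + 1)) with (2 * r * tt r p) by (field; lra). nra. Qed.

Lemma tail r N M : 0 <= r -> 2 * r <= INR N ->
  sum_f_R0 (fun p => if Nat.ltb p N then 0 else tt r p) M <= 2 * tt r N.
Proof.
  intros Hr HN.
  assert (K : forall M, ((M < N)%nat -> sum_f_R0 (fun p => if Nat.ltb p N then 0 else tt r p) M = 0) /\
                        ((N <= M)%nat -> sum_f_R0 (fun p => if Nat.ltb p N then 0 else tt r p) M <= 2 * tt r N - 2 * tt r (S M))).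
  { induction M0 as [|M0 IH].
    - split.
      + intros H. simpl. destruct (Nat.ltb_spec 0 N); [lra|lia].
      + intros H. assert (N = 0%nat) by lia. subst. simpl. assert (H2 := tt_half r 0 0 Hr HN (le_n 0)). lra.
    - destruct IH as [IH1 IH2]. change (sum_f_R0 ?f (S M0)) with (sum_f_R0 f M0 + f (S M0)). split.
      + intros H. rewrite IH1 by lia. destruct (Nat.ltb_spec (S M0) N); [lra|lia].
      + intros H. destruct (Nat.ltb_spec (S M0) N); [lia|].
        assert (H2 := tt_half r N (S M0) Hr HN H).
        destruct (Nat.eq_dec N (S M0)) as [E|E].
        * rewrite IH1 by lia. subst N. lra.
        * assert (H3 := IH2 ltac:(lia)). lra. }
  destruct (Nat.ltb_spec M N) as [H|H].
  - rewrite (proj1 (K M) H). assert (H0 := tt_nonneg r N Hr). lra.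
  - eapply Rle_trans. apply (proj2 (K M) H). assert (H0 := tt_nonneg r (S M) Hr). lra.
Qed.


Lemma sc_bound m' xi : sc m' xi <= sqrt (ln (INR (S m')) + 1) * xi_norm (S m') xi.
Proof.
  unfold sc, cc, xi_norm.
  set (P := sum_f_R0 (fun i => xi (S i) ^ 2) m').
  set (L := ln (INR (S m')) + 1).
  assert (HL1 : 1 <= L). { unfold L. assert (0 <= ln (INR (S m'))). { rewrite <- ln_1. apply ln_le. lra. apply (le_INR 1); lia. } lra. }
  assert (HP : 0 <= P) by (apply sum_nonneg; intros; apply pow2_ge_0).
  assert (CS := CS2 (fun i => xi (S i)) (fun i => / sqrt (INR (S i))) m').
  assert (Eb : sum_f_R0 (fun i => (/ sqrt (INR (S i))) ^ 2) m' = sum_f_R0 (fun i => / INR (S i)) m').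
  { apply sum_eq. intros i _. assert (0 < INR (S i)) by (apply lt_0_INR; lia).
    rewrite pow_inv. f_equal. rewrite <- Rsqr_pow2. apply Rsqr_sqrt. lra. }
  cbv beta in CS. rewrite Eb in CS. fold P in CS. assert (H := harm m'). fold L in H.
  assert (HQ : 0 <= sum_f_R0 (fun i => / INR (S i)) m').
  { apply sum_nonneg. intros. apply Rlt_le, Rinv_0_lt_compat, lt_0_INR; lia. }
  set (S0 := sum_f_R0 (fun i => Rabs (xi (S i) / sqrt (INR (S i)))) m').
  assert (HS : 0 <= S0) by (apply sum_nonneg; intros; apply Rabs_pos).
  apply sq_le_sq; auto. apply Rmult_le_pos; apply sqrt_pos.
  replace (sqrt L * sqrt P * (sqrt L * sqrt P)) with ((sqrt L * sqrt L) * (sqrt P * sqrt P)) by ring.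
  rewrite !sqrt_sqrt by lra.
  unfold S0, Rdiv. assert (E2 : forall y, y ^ 2 = y * y) by (intros; ring). rewrite E2 in CS. nra.
Qed.


Lemma Cmod_Cpow z n : Cmod (Cpow z n) = Cmod z ^ n.
Proof. induction n; simpl. apply Cmod_1. rewrite Cmod_mult, IHn. reflexivity. Qed.

Lemma RtoC_pow x n : RtoC (x ^ n) = Cpow (RtoC x) n.
Proof. induction n; simpl. reflexivity. rewrite RtoC_mult, IHn. reflexivity. Qed.

Lemma ce_bound z r n : Cmod z <= r -> Cmod (ce z n) <= tt r n.
Proof. intros H. unfold ce, tt. rewrite Cmod_mult, Cmod_R, Cmod_Cpow.
  rewrite Rabs_right. rewrite Rmult_comm. apply Rmult_le_compat_r.
  apply Rlt_le, Rinv_0_lt_compat, INR_fact_lt_0. apply pow_incr. split; auto. apply Cmod_ge_0.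
  apply Rle_ge, Rlt_le, Rinv_0_lt_compat, INR_fact_lt_0. Qed.

Lemma ce_RtoC x n : RtoC (x ^ n / INR (fact n)) = ce (RtoC x) n.
Proof. unfold ce, Rdiv. rewrite RtoC_mult, RtoC_pow. ring. Qed.

Lemma Good_ce H f n : Good H f -> Good (Z.of_nat n * H) (fun t => ce (f t) n).
Proof. intros Hf. replace (Z.of_nat n * H)%Z with (0 + Z.of_nat n * H)%Z by lia.
  apply (Good_mult _ _ (fun _ => RtoC (/ INR (fact n))) (fun t => Cpow (f t) n)).
  apply Good_const. apply Good_pow; auto. Qed.

Lemma cont_sum (g : nat -> R -> R) n t : (forall i, continuity_pt (g i) t) ->
  continuity_pt (fun t => sum_f_R0 (fun i => g i t) n) t.
Proof. intros H. induction n; simpl. apply H.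
  apply (continuity_pt_plus (fun t => sum_f_R0 (fun i => g i t) n) (g (S n))); auto. Qed.

Lemma cont_Im m xi t : continuity_pt (fun t => Im_gplus m xi t) t.
Proof. destruct m as [|m']. apply continuity_pt_const. intros a b; auto.
  apply (cont_sum (fun i t => xi (S i) / sqrt (INR (S i)) * sin (INR (S i) * t))).
  intros i. apply (continuity_pt_mult (fun _ => xi (S i) / sqrt (INR (S i))) (fun t => sin (INR (S i) * t))).
  apply continuity_pt_const. intros a b; auto. reg.
Qed.

Lemma cont_F m xi t : continuity_pt (fun t => exp (2 * Im_gplus m xi t)) t.
Proof. apply (continuity_pt_comp (fun t => 2 * Im_gplus m xi t) exp).
  apply (continuity_pt_mult (fun _ => 2) (fun t => Im_gplus m xi t)). apply continuity_pt_const. intros a b; auto.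
  apply cont_Im. apply derivable_continuous_pt. apply derivable_pt_exp. Qed.

Lemma ex_RInt_phi m xi (z : Z) :
  ex_RInt (V := C_R_CompleteNormedModule)
    (fun t => Cmult (RtoC (exp (2 * Im_gplus m xi t))) (cexpi (- IZR z * t))) (- PI) PI.
Proof.
  apply ex_RInt_C; apply (ex_RInt_continuous (V := R_CompleteNormedModule)); intros t _;
  apply continuity_pt_filterlim; simpl.
  - apply (continuity_pt_minus (fun t => exp (2 * Im_gplus m xi t) * cos (- IZR z * t)) (fun t => 0 * sin (- IZR z * t))).
    apply (continuity_pt_mult (fun t => exp (2 * Im_gplus m xi t)) (fun t => cos (- IZR z * t))). apply cont_F. reg. reg.
  - apply (continuity_pt_plus (fun t => exp (2 * Im_gplus m xi t) * sin (- IZR z * t)) (fun t => 0 * cos (- IZR z * t))).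
    apply (continuity_pt_mult (fun t => exp (2 * Im_gplus m xi t)) (fun t => sin (- IZR z * t))). apply cont_F. reg. reg.
Qed.

Lemma normCR (z : C) : @norm R_AbsRing C_R_NormedModule z = Cmod z.
Proof. destruct z as [a b]. unfold Cmod. simpl. unfold norm. simpl. unfold prod_norm. simpl.
 unfold norm; simpl. unfold abs; simpl. f_equal. unfold Rabs; destruct (Rcase_abs a), (Rcase_abs b); ring. Qed.

Lemma U_bound (A B : C) N M Rho : Cmod A <= Rho -> Cmod B <= Rho -> 0 <= Rho -> 2 * Rho <= INR N ->
  Cmod (csum (fun n => csum (fun a => if Nat.ltb a N then RtoC 0 else Cmult (ce A a) (ce B (n - a))) n) (S M))
  <= 2 * tt Rho N * exp Rho.
Proof.
  intros HA HB HR HN.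
  eapply Rle_trans. apply Cmod_csum.
  eapply Rle_trans. apply sum_Rle. intros n _. apply Cmod_csum.
  set (An := fun p => if Nat.ltb p N then 0 else tt Rho p).
  set (Bn := fun q => tt Rho q).
  eapply Rle_trans. apply sum_Rle. intros n _. apply sum_Rle. intros a _.
  instantiate (1 := fun a => An a * Bn (n - a)%nat). simpl.
  unfold An, Bn. destruct (Nat.ltb a N). rewrite Cmod_0. lra.
  rewrite Cmod_mult. apply Rmult_le_compat; try apply Cmod_ge_0; apply ce_bound; auto.
  assert (CF := cauchy_finite An Bn (S M) ltac:(lia)).
  assert (Hpos : 0 <= sum_f_R0 (fun k => sum_f_R0 (fun l => An (S (l + k)) * Bn (S M - l)%nat) (Init.Nat.pred (S M - k))) (Init.Nat.pred (S M))).
  { apply sum_nonneg. intros. apply sum_nonneg. intros. unfold An, Bn. destruct (Nat.ltb _ N).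
    lra. apply Rmult_le_pos; apply tt_nonneg; auto. }
  assert (T1 := tail Rho N (S M) HR HN). fold An in T1.
  assert (T2 : sum_f_R0 Bn (S M) <= exp Rho). { apply (Sx_le_exp Rho (S M) HR). }
  assert (P1 : 0 <= sum_f_R0 An (S M)) by (apply sum_nonneg; intros; unfold An; destruct (Nat.ltb _ N); [lra|apply tt_nonneg; auto]).
  assert (P2 : 0 <= sum_f_R0 Bn (S M)) by (apply sum_nonneg; intros; apply tt_nonneg; auto).
  assert (H3 : sum_f_R0 An (S M) * sum_f_R0 Bn (S M) <= 2 * tt Rho N * exp Rho).
  { apply Rmult_le_compat; auto. }
  change (Bn N) with (tt Rho N) in *. lra.
Qed.

Lemma main_M m' xi k N M Rho :
  sc m' xi <= Rho -> 0 <= Rho -> 2 * Rho <= INR N ->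
  (forall a, (a < N)%nat -> (Z.of_nat a * Z.of_nat (S m') <= Z.of_nat k - 1)%Z) ->
  Cmod (fourier_coef (fun theta => exp (2 * Im_gplus (S m') xi theta)) (Z.of_nat k))
   <= 2 * tt Rho N * exp Rho + (exp (2 * Rho) - Sx (2 * Rho) (S M)).
Proof.
  intros Hsc HR HN Hfreq.
  set (A := cA m' xi). set (B := cB m' xi).
  set (x := fun t => 2 * Im_gplus (S m') xi t).
  set (Tf := fun t => csum (fun n => csum (fun a => if Nat.ltb a N then Cmult (ce (A t) a) (ce (B t) (n - a)) else RtoC 0) n) (S M)).
  set (Uf := fun t => csum (fun n => csum (fun a => if Nat.ltb a N then RtoC 0 else Cmult (ce (A t) a) (ce (B t) (n - a))) n) (S M)).
  set (Ek := fun t => cexpi (- IZR (Z.of_nat k) * t)).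
  set (phi := fun t => Cmult (RtoC (exp (2 * Im_gplus (S m') xi t))) (cexpi (- IZR (Z.of_nat k) * t))).
  set (K := 2 * tt Rho N * exp Rho + (exp (2 * Rho) - Sx (2 * Rho) (S M))).
  assert (Dec : forall t, RtoC (exp (x t)) = Cplus (Cplus (Tf t) (Uf t)) (RtoC (exp (x t) - Sx (x t) (S M)))).
  { intros t. assert (E1 : RtoC (Sx (x t) (S M)) = Cplus (Tf t) (Uf t)).
    { unfold Sx. rewrite csum_RtoC. unfold Tf, Uf. rewrite <- csum_plus. apply csum_ext. intros n _.
      rewrite ce_RtoC. unfold x. rewrite <- AB_sum. fold (A t) (B t). rewrite ce_sum. unfold Qs.
      rewrite <- csum_plus. apply csum_ext. intros a _. destruct (Nat.ltb a N); ring. }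
    rewrite <- E1. rewrite RtoC_minus. ring. }
  assert (GT : Good (Z.of_nat k - 1) Tf).
  { unfold Tf. apply (Good_csum _ (fun n t => csum (fun a => if Nat.ltb a N then Cmult (ce (A t) a) (ce (B t) (n - a)) else RtoC 0) n)).
    intros n _. apply (Good_csum _ (fun a t => if Nat.ltb a N then Cmult (ce (A t) a) (ce (B t) (n - a)) else RtoC 0)).
    intros a _. destruct (Nat.ltb_spec a N) as [Ha|Ha]; [|apply Good_zero].
    eapply Good_mono; [|apply (Good_mult (Z.of_nat a * Z.of_nat (S m')) (Z.of_nat (n - a) * -1) (fun t => ce (A t) a) (fun t => ce (B t) (n - a)))].
    2: apply Good_ce, Good_cA. 2: apply Good_ce, Good_cB.
    specialize (Hfreq a Ha). lia. }
  assert (IT : is_RInt (V := C_R_CompleteNormedModule) (fun t => Cmult (Tf t) (Ek t)) (-PI) PI (RtoC 0)).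
  { apply (int_Good (Z.of_nat k - 1 + - Z.of_nat k)). lia.
    apply Good_mult; auto. eapply Good_ext; [|apply (Good_exp (RtoC 1) (- Z.of_nat k))].
    intros t. unfold Ek. rewrite opp_IZR. ring. }
  assert (IP : is_RInt (V := C_R_CompleteNormedModule) phi (-PI) PI (RInt (V := C_R_CompleteNormedModule) phi (-PI) PI)).
  { apply RInt_correct. apply ex_RInt_phi. }
  assert (IG := is_RInt_minus _ _ _ _ _ _ IP IT).
  assert (Bd : forall t, -PI <= t <= PI -> @norm R_AbsRing C_R_NormedModule (minus (phi t) (Cmult (Tf t) (Ek t))) <= K).
  { intros t _. rewrite normCR.
    change (minus (phi t) (Cmult (Tf t) (Ek t))) with (Cminus (phi t) (Cmult (Tf t) (Ek t))).
    assert (E : Cminus (phi t) (Cmult (Tf t) (Ek t)) = Cmult (Cplus (Uf t) (RtoC (exp (x t) - Sx (x t) (S M)))) (Ek t)).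
    { unfold phi. change (2 * Im_gplus (S m') xi t) with (x t). rewrite Dec. fold (Ek t). ring. }
    rewrite E, Cmod_mult. unfold Ek. rewrite Cmod_cexpi, Rmult_1_r.
    eapply Rle_trans. apply Cmod_triangle. unfold K. apply Rplus_le_compat.
    - apply U_bound; auto. unfold A. eapply Rle_trans. apply cA_bound. auto.
      unfold B. eapply Rle_trans. apply cB_bound. auto.
    - rewrite Cmod_R. apply taylor_bound. unfold x. eapply Rle_trans. apply Im_bound. lra. }
  assert (Hpi : -PI <= PI) by (assert (H := PI_RGT_0); lra).
  assert (IG' : is_RInt (V := C_R_CompleteNormedModule) (fun t => minus (phi t) (Cmult (Tf t) (Ek t))) (-PI) PI (RInt (V := C_R_CompleteNormedModule) phi (-PI) PI)).
  { eapply is_RInt_val; [|exact IG]. apply injective_projections; simpl; unfold plus, opp; simpl; unfold plus, opp; simpl; ring. }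
  assert (Hle := norm_RInt_le (fun t => minus (phi t) (Cmult (Tf t) (Ek t))) (fun _ => K) (-PI) PI _ _ Hpi Bd IG' (is_RInt_const _ _ K)).
  rewrite normCR in Hle. unfold scal in Hle; simpl in Hle; unfold mult in Hle; simpl in Hle.
  unfold fourier_coef. change (RInt (V := C_R_CompleteNormedModule) (fun theta => Cmult (RtoC ((fun theta => exp (2 * Im_gplus (S m') xi theta)) theta)) (cexpi (- IZR (Z.of_nat k) * theta))) (-PI) PI) with (RInt (V := C_R_CompleteNormedModule) phi (-PI) PI).
  rewrite Cmod_mult, Cmod_R. assert (HP := PI_RGT_0). rewrite Rabs_right.
  2: { apply Rle_ge, Rlt_le, Rinv_0_lt_compat. lra. }
  apply Rmult_le_reg_l with (2 * PI). lra. rewrite <- Rmult_assoc, Rinv_r, Rmult_1_l by lra.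
  replace (2 * PI * K) with ((PI - - PI) * K) by ring. exact Hle.
Qed.


Theorem lemma2p2 (m : nat) (xi : nat -> R) (k : nat) :
  (1 <= m)%nat ->
  (1 <= k)%nat ->
  INR k >= 2 * INR m * (sqrt (ln (INR m) + 1) * xi_norm m xi) ->
  Cmod (fourier_coef (fun theta => exp (2 * Im_gplus m xi theta)) (Z.of_nat k))
  <= 2 * exp (sqrt (ln (INR m) + 1) * xi_norm m xi)
       * (sqrt (ln (INR m) + 1) * xi_norm m xi) ^ (ceil_div k m)
       / INR (fact (ceil_div k m)).
Proof.
  intros Hm Hk Hineq.
  destruct m as [|m']; [lia|].
  set (Rho := sqrt (ln (INR (S m')) + 1) * xi_norm (S m') xi) in *.
  set (N := ceil_div k (S m')).
  assert (Hsc := sc_bound m' xi). fold Rho in Hsc.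
  assert (HR : 0 <= Rho). { eapply Rle_trans; [|exact Hsc]. apply sum_nonneg. intros; apply Rabs_pos. }
  assert (Hdiv : (k <= N * S m' <= k + m')%nat).
  { unfold N, ceil_div. replace (k + S m' - 1)%nat with (k + m')%nat by lia.
    assert (H1 := Nat.div_mod_eq (k + m') (S m')). assert (H2 := Nat.mod_upper_bound (k + m') (S m') ltac:(lia)).
    lia. }
  assert (HN : 2 * Rho <= INR N).
  { assert (E : INR k <= INR N * INR (S m')) by (rewrite <- mult_INR; apply le_INR; lia).
    assert (Hm0 : 0 < INR (S m')) by (apply lt_0_INR; lia). nra. }
  assert (Hfreq : forall a, (a < N)%nat -> (Z.of_nat a * Z.of_nat (S m') <= Z.of_nat k - 1)%Z).
  { intros a Ha. assert (a * S m' + S m' <= N * S m')%nat by nia. lia. }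
  assert (Hlim : is_lim_seq (fun M => 2 * tt Rho N * exp Rho + (exp (2 * Rho) - Sx (2 * Rho) (S M))) (2 * tt Rho N * exp Rho)).
  { apply (is_lim_seq_plus _ _ (2 * tt Rho N * exp Rho) 0). apply is_lim_seq_const.
    apply (is_lim_seq_incr_1 (fun M => exp (2 * Rho) - Sx (2 * Rho) M)). apply delta_lim. unfold is_Rbar_plus; simpl. rewrite Rplus_0_r. reflexivity. }
  assert (Hl := is_lim_seq_le _ _ _ _ (fun M => main_M m' xi k N M Rho Hsc HR HN Hfreq) (is_lim_seq_const _) Hlim).
  simpl in Hl. unfold tt in Hl. replace (2 * exp Rho * Rho ^ N / INR (fact N)) with (2 * (Rho ^ N / INR (fact N)) * exp Rho) by (unfold Rdiv; ring).
  exact Hl.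
Qed.
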